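(* Let $r=r(n)$ satisfy $r/n^{1/3}\to\infty$ and $r=o(n^{2/3})$. Then $\Pr(\mathcal B_3)=o(1)$ as $n\to\infty$, where $\mathcal B_3$ is the event that at least three edges are chosen and $e_1\cap e_2\cap e_3\neq\emptyset$.
   Context: Random intersecting process: Let $[n]=\{1,\dots,n\}$ and $\binom{[n]}{r}$ the family of $r$-subsets of $[n]$. Choose $e_1$ uniformly at random from $\binom{[n]}{r}$. Given $\mathcal F_i=\{e_1,\dots,e_i\}$, let $\mathcal A(\mathcal F_i)=\{e\in\binom{[n]}{r}: e\notin\mathcal F_i,\ e\cap e_j\neq\emptyset \text{ for all } 1\le j\le i\}$, and choose $e_{i+1}$ uniformly at random from $\mathcal A(\mathcal F_i)$. The process halts when $\mathcal A(\mathcal F_i)=\emptyset$. *)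

(* Defs.v *)
From mathcomp Require Import all_boot.
From Stdlib Require Import Reals.

Set Implicit Arguments.
Unset Strict Implicit.
Unset Printing Implicit Defensive.

Definition rsets (n r : nat) : seq {set 'I_n} :=
  enum [pred A : {set 'I_n} | #|A| == r].

Definition avail (n r : nat) (F : seq {set 'I_n}) : seq {set 'I_n} :=
  [seq e <- rsets n r | (e \notin F) && all (fun f : {set 'I_n} => e :&: f != set0) F].

Definition sumR {T : Type} (l : seq T) (f : T -> R) : R :=
  foldr (fun x acc => (f x + acc)%R) 0%R l.

(* Probability of B_3: e1 uniform in binom([n],r), e2 uniform in A({e1}),
   e3 uniform in A({e1,e2}) (so at least three edges are chosen), and
   e1 ∩ e2 ∩ e3 nonempty.  Branches where the process halts earlier
   contribute 0 (empty sums). *)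
Definition probB3 (n r : nat) : R :=
  sumR (rsets n r) (fun e1 =>
    (/ INR (size (rsets n r)) *
     sumR (avail r [:: e1]) (fun e2 =>
       / INR (size (avail r [:: e1])) *
       sumR (avail r [:: e1; e2]) (fun e3 =>
         / INR (size (avail r [:: e1; e2])) *
         (if e1 :&: e2 :&: e3 != set0 then 1 else 0))))%R).

(* Main.v *)
Require Import Defs.
From mathcomp Require Import all_boot.
From Stdlib Require Import Reals.
From mathcomp Require Import zify.
From Stdlib Require Import Lra Lia.
Import ssrnat.

Set Implicit Arguments.
Unset Strict Implicit.
Unset Printing Implicit Defensive.


Lemma sumR_le {T : eqType} (l : seq T) f g :
  (forall x, x \in l -> (f x <= g x)%R) -> (sumR l f <= sumR l g)%R.
Proof.
elim: l => [|a l IH] H /=; first lra.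
have := H a (mem_head _ _). have := IH (fun x hx => H x (mem_behead (s:=a::l) hx)). lra.
Qed.

Lemma sumR_ge0 {T : eqType} (l : seq T) f :
  (forall x, x \in l -> (0 <= f x)%R) -> (0 <= sumR l f)%R.
Proof.
elim: l => [|a l IH] H /=; first lra.
have := H a (mem_head _ _). have := IH (fun x hx => H x (mem_behead (s:=a::l) hx)). lra.
Qed.

Lemma sumR_scal {T} (l : seq T) c f :
  sumR l (fun x => c * f x)%R = (c * sumR l f)%R.
Proof. elim: l => [|a l IH] /=; rewrite ?IH; ring. Qed.

Lemma sumR_nat {T} (l : seq T) (g : T -> nat) :
  sumR l (fun x => INR (g x)) = INR (\sum_(x <- l) g x).
Proof.
elim: l => [|a l IH] /=; first by rewrite big_nil.
by rewrite big_cons IH -plus_INR.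
Qed.

Lemma sumR_ind {T} (l : seq T) (p : pred T) :
  sumR l (fun x => if p x then 1 else 0)%R = INR (count p l).
Proof.
elim: l => [|a l IH] /=; first by [].
rewrite IH plus_INR; case: (p a) => /=; ring.
Qed.

Lemma sumR_const {T} (l : seq T) c :
  sumR l (fun _ => c) = (INR (size l) * c)%R.
Proof.
elim: l => [|a l IH]; first (simpl; ring).
have -> : INR (size (a::l)) = (INR (size l) + 1)%R by rewrite -S_INR.
rewrite [sumR _ _]/= IH; ring.
Qed.


Lemma ffact_lb (M m j : nat) : j <= m -> m <= M ->
  'C(M, j) * (m - j) ^ j <= 'C(m, j) * M ^ j.
Proof.
move=> hjm hmM.
rewrite -(@leq_pmul2r (j`!)) ?fact_gt0 //.
rewrite mulnAC [X in _ <= X]mulnAC !bin_ffact.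
have: forall i, i <= j -> M ^_ i * (m - j) ^ i <= m ^_ i * M ^ i.
  elim=> [|i IH] hi; first by rewrite !ffactn0 !expn0.
  rewrite !ffactnSr !expnSr.
  have h1 := IH (ltnW hi).
  have h2 : (M - i) * (m - j) <= (m - i) * M by nia.
  rewrite mulnACA [X in _ <= X]mulnACA.
  exact: leq_mul.
by apply.
Qed.

Lemma ffact_ub (M m j : nat) : m <= M ->
  'C(m, j) * M ^ j <= 'C(M, j) * m ^ j.
Proof.
move=> hmM.
rewrite -(@leq_pmul2r (j`!)) ?fact_gt0 //.
rewrite mulnAC [X in _ <= X]mulnAC !bin_ffact.
elim: j => [|i IH]; first by rewrite !ffactn0 !expn0.
rewrite !ffactnSr !expnSr.
have h2 : (m - i) * M <= (M - i) * m by nia.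
rewrite mulnACA [X in _ <= X]mulnACA.
exact: leq_mul.
Qed.


Section Comb.
Variable n r : nat.
Local Notation T := 'I_n.

Lemma cardC_I (A : {set T}) : #|~: A| = n - #|A|.
Proof. have := cardsC A; rewrite card_ord => h; lia. Qed.

Lemma card_contain (x : T) : 0 < r ->
  #|[set S : {set T} | (#|S| == r) && (x \in S)]| = 'C(n.-1, r.-1).
Proof.
move=> r0.
have -> : n.-1 = #|[set~ x]| by rewrite cardsC1 card_ord.
rewrite -cards_draws.
have -> : [set S : {set T} | (#|S| == r) && (x \in S)] =
   (fun U => x |: U) @: [set U : {set T} | U \subset [set~ x] & #|U| == r.-1].
  apply/setP => S; rewrite inE; apply/andP/imsetP.
  - move=> [/eqP hS xS]; exists (S :\ x); last by rewrite setD1K.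
    rewrite inE; apply/andP; split.
      by apply/subsetP => y; rewrite !inE => /andP[].
    by have := cardsD1 x S; rewrite xS hS add1n => ->.
  - move=> [U]; rewrite inE => /andP[sU /eqP cU] ->.
    have xU : x \notin U by apply/negP => /(subsetP sU); rewrite !inE eqxx.
    by rewrite cardsU1 xU cU add1n prednK // setU11.
apply: card_in_imset => U V; rewrite !inE => /andP[sU _] /andP[sV _] e.
have xU : x \notin U by apply/negP => /(subsetP sU); rewrite !inE eqxx.
have xV : x \notin V by apply/negP => /(subsetP sV); rewrite !inE eqxx.
by rewrite -(setU1K xU) e setU1K.
Qed.

Lemma card_avoid (A : {set T}) :
  #|[set S : {set T} | (#|S| == r) && (S :&: A == set0)]| = 'C(n - #|A|, r).
Proof.
rewrite -cardC_I -cards_draws; apply: eq_card => S; rewrite !inE andbC.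
by rewrite setI_eq0 disjoints_subset.
Qed.

Lemma sum_inter (X : {set T}) : 0 < r ->
  \sum_(S in [set S : {set T} | #|S| == r]) #|S :&: X| = #|X| * 'C(n.-1, r.-1).
Proof.
move=> r0.
have e : forall S : {set T}, #|S :&: X| = \sum_(x in X) (x \in S : nat).
  move=> S; rewrite -sum1_card big_mkcond /= [RHS]big_mkcond /=.
  by apply: eq_bigr => x _; rewrite !inE; case: (x \in X); case: (x \in S).
under eq_bigr => S _ do rewrite e.
rewrite exchange_big /= -sum_nat_const; apply: eq_bigr => x _.
rewrite -(card_contain x r0) -sum1_card big_mkcond /= [RHS]big_mkcond /=.
by apply: eq_bigr => S _; rewrite !inE; case: (#|S| == r); case: (x \in S).
Qed.


Lemma inj1 (A : {set T}) : 1 < r ->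
  #|A| * 'C(n - #|A|, r.-1) <=
  #|[set S : {set T} | [&& #|S| == r, S != A & S :&: A != set0]]|.
Proof.
move=> r1.
set D := setX A [set U : {set T} | U \subset ~: A & #|U| == r.-1].
have cD : #|D| = #|A| * 'C(n - #|A|, r.-1) by rewrite cardsX cards_draws cardC_I.
rewrite -cD.
have injf : {in D &, injective (fun p : T * {set T} => p.1 |: p.2)}.
  move=> [x U] [y V]; rewrite !inE /= => /andP[xA /andP[sU _]] /andP[yA /andP[sV _]] e.
  have hU : (x |: U) :&: A = [set x].
    apply/setP => z; rewrite !inE; case: (eqVneq z x) => [->|]; first by rewrite xA.
    by move=> _ /=; case zU: (z \in U) => //=; have := subsetP sU z zU; rewrite inE => /negbTE ->.
  have hV : (y |: V) :&: A = [set y].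
    apply/setP => z; rewrite !inE; case: (eqVneq z y) => [->|]; first by rewrite yA.
    by move=> _ /=; case zV: (z \in V) => //=; have := subsetP sV z zV; rewrite inE => /negbTE ->.
  have exy : x = y by apply/set1_inj; rewrite -hU -hV e.
  subst y.
  have xU : x \notin U by apply/negP => /(subsetP sU); rewrite inE xA.
  have xV : x \notin V by apply/negP => /(subsetP sV); rewrite inE xA.
  by rewrite -(setU1K xU) e setU1K.
rewrite -(card_in_imset injf); apply: subset_leq_card; apply/subsetP => S.
move=> /imsetP[[x U]]; rewrite !inE /= => /andP[xA /andP[sU /eqP cU]] ->.
have xU : x \notin U by apply/negP => /(subsetP sU); rewrite inE xA.
rewrite cardsU1 xU cU add1n prednK ?(ltnW r1) // eqxx /=.
apply/andP; split.
  have : 0 < #|U| by rewrite cU; case: r r1 => [|[|]].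
  rewrite card_gt0 => /set0Pn[u uU]; apply/eqP => e.
  have : u \in A by rewrite -e !inE uU orbT.
  by have := subsetP sU u uU; rewrite inE => /negbTE ->.
by apply/set0Pn; exists x; rewrite !inE eqxx xA.
Qed.

Lemma inj2 (A B : {set T}) : 1 < r -> [disjoint A & B] ->
  #|A| * #|B| * 'C(n - #|A| - #|B|, r.-2) <=
  #|[set S : {set T} | [&& #|S| == r, S :&: A != set0 & S :&: B != set0]]|.
Proof.
move=> r1 dAB.
set D := setX (setX A B) [set U : {set T} | U \subset ~: (A :|: B) & #|U| == r.-2].
have cAB : #|A :|: B| = #|A| + #|B|.
  by rewrite cardsU; move: dAB; rewrite -setI_eq0 => /eqP ->; rewrite cards0 subn0.
have cD : #|D| = #|A| * #|B| * 'C(n - #|A| - #|B|, r.-2).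
  by rewrite !cardsX cards_draws cardC_I cAB subnDA.
rewrite -cD.
have AB : forall z, z \in A -> z \in B -> False.
  by move=> z zA zB; move: dAB; rewrite -setI_eq0 => /eqP/setP/(_ z); rewrite !inE zA zB.
have key : forall (x y : T) (U : {set T}), x \in A -> y \in B -> U \subset ~: (A :|: B) ->
    (x |: (y |: U)) :&: A = [set x] /\ (x |: (y |: U)) :&: B = [set y] /\
    x \notin y |: U /\ y \notin U.
  move=> x y U xA yB sU.
  have nU : forall z, z \in U -> (z \in A) = false /\ (z \in B) = false.
    by move=> z /(subsetP sU); rewrite !inE negb_or => /andP[/negbTE -> /negbTE ->].
  split; [|split; [|split]].
  - apply/setP => z; rewrite !inE; case: (eqVneq z x) => [->|]; first by rewrite xA.
    move=> _ /=; case: (eqVneq z y) => [->|] /=; first by case yA: (y \in A) => //; case: (AB y).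
    by move=> _; case zU: (z \in U) => //=; rewrite (nU z zU).1.
  - apply/setP => z; rewrite !inE; case: (eqVneq z y) => [->|]; first by rewrite yB orbT.
    move=> _ /=; case: (eqVneq z x) => [->|_] /=.
      by case xB: (x \in B) => //; case: (AB x); rewrite ?andbF.
    by case zU: (z \in U) => //=; rewrite (nU z zU).2.
  - rewrite !inE negb_or; apply/andP; split.
      by apply/eqP => exy; subst y; case: (AB x).
    by apply/negP => /nU []; rewrite xA.
  - by apply/negP => /nU []; rewrite yB.
have injf : {in D &, injective (fun p : T * T * {set T} => p.1.1 |: (p.1.2 |: p.2))}.
  move=> [[x y] U] [[x' y'] V]; rewrite !inE /=.
  move=> /andP[/andP[xA yB] /andP[sU _]] /andP[/andP[xA' yB'] /andP[sV _]] e.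
  have [hA [hB [xn yn]]] := key x y U xA yB sU.
  have [hA' [hB' [xn' yn']]] := key x' y' V xA' yB' sV.
  have ex : x = x' by apply/set1_inj; rewrite -hA -hA' e.
  have ey : y = y' by apply/set1_inj; rewrite -hB -hB' e.
  subst x' y'.
  by rewrite -(setU1K yn) -(setU1K xn) e !setU1K.
rewrite -(card_in_imset injf); apply: subset_leq_card; apply/subsetP => S.
move=> /imsetP[[[x y] U]]; rewrite !inE /= => /andP[/andP[xA yB] /andP[sU /eqP cU]] ->.
have [hA [hB [xn yn]]] := key x y U xA yB sU.
rewrite hA hB cardsU1 xn cardsU1 yn cU !add1n.
have -> : (r.-2).+2 = r by case: r r1 => [|[|]].
by rewrite eqxx /=; apply/andP; split; apply/set0Pn; [exists x | exists y]; rewrite inE.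
Qed.

End Comb.


Lemma mem_rsets n r (S : {set 'I_n}) : (S \in rsets n r) = (#|S| == r).
Proof. by rewrite mem_enum. Qed.

Lemma mem_avail n r (F : seq {set 'I_n}) e :
  (e \in avail r F) =
  [&& #|e| == r, e \notin F & all (fun f : {set 'I_n} => e :&: f != set0) F].
Proof. by rewrite mem_filter mem_rsets andbC andbA. Qed.

Lemma uniq_rsets n r : uniq (rsets n r).
Proof. exact: enum_uniq. Qed.

Lemma uniq_avail n r (F : seq {set 'I_n}) : uniq (avail r F).
Proof. exact/filter_uniq/uniq_rsets. Qed.

Lemma size_rsets n r : size (rsets n r) = 'C(n, r).
Proof.
rewrite /rsets -cardE -[in RHS](card_ord n) -card_draws.
by apply: eq_card => S; rewrite !inE.
Qed.

Lemma card_le_size (T : finType) (X : {set T}) (l : seq T) :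
  {subset X <= l} -> #|X| <= size l.
Proof.
move=> H; rewrite cardE; apply: uniq_leq_size; first exact: enum_uniq.
by move=> x; rewrite mem_enum => /H.
Qed.

Lemma sum_sub_le (T : finType) (l : seq T) (X : {set T}) (f : T -> nat) :
  uniq l -> {subset l <= X} -> \sum_(x <- l) f x <= \sum_(x in X) f x.
Proof.
move=> ul sl; rewrite big_uniq // [X in _ <= X](bigID (fun x => x \in l)) /=.
apply: leq_trans (leq_addr _ _).
rewrite [X in _ <= X](eq_bigl (fun x => x \in l)) // => x.
by case xl: (x \in l); rewrite ?andbT ?andbF // (sl x xl).
Qed.

Lemma count_le_sum (T : Type) (l : seq T) (p : pred T) (f : T -> nat) :
  (forall x, p x -> 0 < f x) -> count p l <= \sum_(x <- l) f x.
Proof.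
move=> H; elim: l => [|a l IH] /=; first by rewrite big_nil.
rewrite big_cons; apply: leq_add => //.
by case pa: (p a) => //; apply: H.
Qed.


Lemma leq_expl (m n e : nat) : m <= n -> m ^ e <= n ^ e.
Proof. move=> h; elim: e => [|e IH]; first by rewrite !expn0. by rewrite !expnS leq_mul. Qed.

Lemma INR_leq (m n : nat) : m <= n -> (INR m <= INR n)%R.
Proof. by move/leP; apply: le_INR. Qed.

Lemma INR_mul (m n : nat) : INR (m * n) = (INR m * INR n)%R.
Proof. exact: mult_INR. Qed.

Lemma INR_exp (m n : nat) : INR (m ^ n) = (INR m ^ n)%R.
Proof.
elim: n => [|n IH]; first by rewrite expn0.
by rewrite expnS INR_mul IH.
Qed.

Lemma INR_add (m n : nat) : INR (m + n) = (INR m + INR n)%R.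
Proof. exact: plus_INR. Qed.

Lemma INR_sub (m n : nat) : n <= m -> INR (m - n) = (INR m - INR n)%R.
Proof. by move/leP; apply: minus_INR. Qed.

Lemma Rdiv_le_l' (a b c : R) : (0 < c)%R -> (a <= b * c)%R -> (a / c <= b)%R.
Proof.
move=> hc h; apply: (Rmult_le_reg_r c) => //.
rewrite /Rdiv Rmult_assoc Rinv_l; lra.
Qed.

Lemma Rle_div_r' (a b c : R) : (0 < c)%R -> (a * c <= b)%R -> (a <= b / c)%R.
Proof.
move=> hc h; apply: (Rmult_le_reg_r c) => //.
rewrite /Rdiv Rmult_assoc Rinv_l; lra.
Qed.

Lemma pow_exp_le (x : R) (k : nat) : (0 <= 1 + x)%R -> ((1 + x) ^ k <= exp (INR k * x))%R.
Proof.
move=> hx; elim: k => [|k IH]; first by rewrite /= Rmult_0_l exp_0; lra.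
have -> : ((1 + x) ^ k.+1 = (1+x)^k * (1+x))%R by rewrite [LHS]/= Rmult_comm.
rewrite S_INR Rmult_plus_distr_r Rmult_1_l exp_plus.
apply: Rmult_le_compat => //; last exact: exp_ineq1_le.
exact: pow_le.
Qed.

Lemma exp_m4 (x : R) : (4 <= x)%R -> (exp (- x) <= / 5)%R.
Proof.
move=> hx; rewrite exp_Ropp; apply: Rinv_le_contravar; first lra.
have := exp_ineq1_le x; lra.
Qed.

Lemma binratio (M m j N d : nat) : j <= m -> m <= M -> M <= N -> 0 < d -> d <= m - j ->
  (INR 'C(M, j) <= INR 'C(m, j) * (INR N / INR d) ^ j)%R.
Proof.
move=> h1 h2 h3 h4 h5.
have hn : 'C(M, j) * d ^ j <= 'C(m, j) * N ^ j.
  apply: leq_trans (_ : 'C(M, j) * (m - j) ^ j <= _).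
    by apply: leq_mul => //; apply: leq_expl.
  apply: leq_trans (ffact_lb h1 h2) _.
  by apply: leq_mul => //; apply: leq_expl.
have := INR_leq hn; rewrite !INR_mul !INR_exp => h.
have dp : (0 < INR d)%R by apply: lt_0_INR; apply/ltP.
have dpj : (0 < INR d ^ j)%R by apply: pow_lt.
rewrite /Rdiv Rpow_mult_distr pow_inv -Rmult_assoc.
apply: (Rmult_le_reg_r (INR d ^ j)) => //.
rewrite Rmult_assoc Rinv_l ?Rmult_1_r //; lra.
Qed.

Lemma avoid_small (n r a : nat) : a <= n -> 0 < n -> 4 * n <= r * a ->
  (INR 'C(n - a, r) <= INR 'C(n, r) / 5)%R.
Proof.
move=> h1 h2 h3.
have hn := ffact_ub r (leq_subr a n).
have := INR_leq hn; rewrite !INR_mul !INR_exp INR_sub // => h.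
have np : (0 < INR n)%R by apply: lt_0_INR; apply/ltP.
have npj : (0 < INR n ^ r)%R by apply: pow_lt.
have hq : ((INR n - INR a) ^ r = INR n ^ r * (1 + - (INR a / INR n)) ^ r)%R.
  rewrite -Rpow_mult_distr; congr (_ ^ _)%R; field; lra.
rewrite hq in h.
have ha : (INR a <= INR n)%R by apply: INR_leq.
have ha0 : (0 <= INR a)%R by apply: pos_INR.
have hb : ((1 + - (INR a / INR n)) ^ r <= / 5)%R.
  apply: Rle_trans (pow_exp_le _ _) _.
    have : (INR a / INR n <= 1)%R.
      by apply: Rdiv_le_l' => //; lra.
    lra.
  have -> : (INR r * - (INR a / INR n) = - (INR r * INR a / INR n))%R by field; lra.
  apply: exp_m4.
  apply: Rle_div_r' => //.
  have := INR_leq h3; rewrite !INR_mul; simpl INR; lra.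
have hc : (0 <= INR 'C(n, r))%R by apply: pos_INR.
have hcn : (0 <= (1 + - (INR a / INR n)) ^ r)%R.
  apply: pow_le.
  have : (INR a / INR n <= 1)%R by apply: Rdiv_le_l' => //; lra.
  lra.
apply: (Rmult_le_reg_r (INR n ^ r)) => //.
apply: Rle_trans h _.
rewrite (Rmult_comm (INR n ^ r)) -Rmult_assoc.
apply: Rmult_le_compat_r; first lra.
rewrite /Rdiv; apply: Rmult_le_compat_l => //.
Qed.


Lemma exp_le (x y : R) : (x <= y)%R -> (exp x <= exp y)%R.
Proof.
move=> h; case: (Rle_lt_or_eq_dec _ _ h) => [/exp_increasing|->]; lra.
Qed.

Lemma qE (n r : nat) : 1 < r -> 6 * r <= n -> r * r <= 8 * n ->
  ((INR n / INR (n - 3 * r)) ^ r <= exp 48)%R.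
Proof.
move=> h1 h2 h3.
have hd : (0 < INR (n - 3 * r))%R by apply: lt_0_INR; apply/ltP; lia.
have e : (INR n / INR (n - 3 * r) = 1 + INR (3 * r) / INR (n - 3 * r))%R.
  rewrite INR_sub ?INR_mul; last lia.
  rewrite INR_sub ?INR_mul in hd; last lia.
  field; lra.
rewrite e; apply: Rle_trans (pow_exp_le _ _) _.
  have : (0 <= INR (3 * r) / INR (n - 3 * r))%R.
    by apply: Rle_div_r' => //; rewrite Rmult_0_l; apply: pos_INR.
  lra.
apply: exp_le.
rewrite -Rmult_assoc -INR_mul; apply: Rdiv_le_l' => //.
have -> : (48 = INR 48)%R by rewrite INR_IZR_INZ.
rewrite -INR_mul; apply: INR_leq; nia.
Qed.

Section Main.
Variables n r : nat.
Hypothesis r2 : 1 < r.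
Hypothesis h6 : 6 * r <= n.
Local Notation T := 'I_n.
Local Notation rsS := [set S : {set T} | #|S| == r].

Definition inner (e1 e2 : {set T}) : R :=
  sumR (avail r [:: e1; e2]) (fun e3 =>
    / INR (size (avail r [:: e1; e2])) * (if e1 :&: e2 :&: e3 != set0 then 1 else 0))%R.

Lemma inner_le1 (e1 e2 : {set T}) : (inner e1 e2 <= 1)%R.
Proof.
rewrite /inner sumR_scal sumR_ind.
set l := avail r _.
have hc : count (fun e3 => e1 :&: e2 :&: e3 != set0) l <= size l by apply: count_size.
case: (posnP (size l)) => [->|hp].
  by rewrite /= Rinv_0 Rmult_0_l; lra.
have hp' : (0 < INR (size l))%R by apply: lt_0_INR; apply/ltP.
rewrite Rmult_comm; apply: Rdiv_le_l' => //; rewrite Rmult_1_l; exact: INR_leq.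
Qed.

Definition Gset (e1 e2 : {set T}) : {set {set T}} :=
  [set S : {set T} | [&& #|S| == r, S :&: (e1 :\: e2) != set0 & S :&: (e2 :\: e1) != set0]].

Lemma C1E : n * 'C(n.-1, r.-1) = r * 'C(n, r).
Proof. by have := mul_bin_diag n r.-1; rewrite prednK // ltnW. Qed.

Lemma inner_bound (e1 e2 : {set T}) : #|e1| = r -> #|e2| = r -> 0 < #|Gset e1 e2| ->
  (inner e1 e2 <= INR #|e1 :&: e2| * INR 'C(n.-1, r.-1) / INR #|Gset e1 e2|)%R.
Proof.
move=> c1 c2 gp.
rewrite /inner sumR_scal sumR_ind.
set l := avail r _.
set I := e1 :&: e2.
have hc : count (fun e3 => e1 :&: e2 :&: e3 != set0) l <= #|I| * 'C(n.-1, r.-1).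
  apply: leq_trans (_ : \sum_(e3 <- l) #|e3 :&: I| <= _).
    apply: count_le_sum => S /=; rewrite card_gt0 setIC.
    by [].
  rewrite -sum_inter; last by apply: ltnW.
  apply: sum_sub_le; first exact: uniq_avail.
  by move=> S; rewrite mem_avail !inE => /andP[-> _].
have hs : #|Gset e1 e2| <= size l.
  apply: card_le_size => S; rewrite inE mem_avail => /and3P[cS hA hB].
  rewrite cS /= !inE negb_or /= andbT.
  apply/and3P; split; first (apply/andP; split).
  - apply/eqP => e; move: hB; rewrite e.
    suff -> : e1 :&: (e2 :\: e1) = set0 by rewrite eqxx.
    by apply/setP => x; rewrite !inE; case: (x \in e1); rewrite ?andbF.
  - apply/eqP => e; move: hA; rewrite e.
    suff -> : e2 :&: (e1 :\: e2) = set0 by rewrite eqxx.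
    by apply/setP => x; rewrite !inE; case: (x \in e2); rewrite ?andbF.
  - move: hA; apply: contra => /eqP h; apply/eqP/setP => x; rewrite !inE.
    by move/setP: h => /(_ x); rewrite !inE; case: (x \in S); case: (x \in e1); case: (x \in e2).
  - move: hB; apply: contra => /eqP h; apply/eqP/setP => x; rewrite !inE.
    by move/setP: h => /(_ x); rewrite !inE; case: (x \in S); case: (x \in e1); case: (x \in e2).
have gp' : (0 < INR #|Gset e1 e2|)%R by apply: lt_0_INR; apply/ltP.
have sp' : (INR #|Gset e1 e2| <= INR (size l))%R by apply: INR_leq.
rewrite -INR_mul Rmult_comm.
apply: Rle_trans (_ : INR (count _ l) * / INR #|Gset e1 e2| <= _)%R.
  apply: Rmult_le_compat_l; first exact: pos_INR.
  by apply: Rinv_le_contravar.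
apply: Rmult_le_compat_r; first by apply: Rlt_le; apply: Rinv_0_lt_compat.
exact: INR_leq.
Qed.


Lemma per_e1 (e1 : {set T}) (h W : R) : (0 <= h)%R -> (0 <= W)%R ->
  (forall e2, e2 \in avail r [:: e1] -> 2 * #|e1 :&: e2| <= r ->
     (inner e1 e2 <= INR #|e1 :&: e2| * h)%R) ->
  (INR (\sum_(e2 <- avail r [:: e1]) #|e1 :&: e2|) <= W * INR (size (avail r [:: e1])))%R ->
  (sumR (avail r [:: e1]) (fun e2 => / INR (size (avail r [:: e1])) * inner e1 e2)
     <= (2 / INR r + h) * W)%R.
Proof.
move=> h0 W0 Hin Hsum.
set l := avail r [:: e1].
have rp : (0 < INR r)%R by apply: lt_0_INR; apply/ltP; apply: ltnW.
have c0 : (0 <= 2 / INR r)%R by apply: Rle_div_r' => //; lra.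
set c := (2 / INR r + h)%R.
rewrite sumR_scal.
have step : (sumR l (fun e2 => inner e1 e2) <= sumR l (fun e2 => c * INR #|e1 :&: e2|))%R.
  apply: sumR_le => e2 he2.
  have k0 : (0 <= INR #|e1 :&: e2|)%R by apply: pos_INR.
  case: (leqP (2 * #|e1 :&: e2|) r) => hk.
    apply: Rle_trans (Hin e2 he2 hk) _; rewrite /c; nra.
  apply: Rle_trans (inner_le1 e1 e2) _.
  have : (INR r <= 2 * INR #|e1 :&: e2|)%R.
    have := INR_leq (ltnW hk); rewrite INR_mul; simpl INR; lra.
  move=> hr.
  have : (1 <= 2 / INR r * INR #|e1 :&: e2|)%R.
    rewrite /Rdiv Rmult_assoc Rmult_comm Rmult_assoc.
    apply: (Rmult_le_reg_l (INR r)) => //.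
    rewrite -Rmult_assoc Rinv_r; lra.
  rewrite /c; nra.
rewrite sumR_scal sumR_nat in step.
case: (posnP (size l)) => [->|sp].
  rewrite /= Rinv_0 Rmult_0_l; rewrite /c; nra.
have sp' : (0 < INR (size l))%R by apply: lt_0_INR; apply/ltP.
apply: Rle_trans (_ : / INR (size l) * (c * (W * INR (size l))) <= _)%R.
  apply: Rmult_le_compat_l; first by apply: Rlt_le; apply: Rinv_0_lt_compat.
  apply: Rle_trans step _; apply: Rmult_le_compat_l => //; rewrite /c; lra.
right; field; lra.
Qed.


Lemma sum_k_le (e1 : {set T}) : #|e1| = r ->
  \sum_(e2 <- avail r [:: e1]) #|e1 :&: e2| <= r * 'C(n.-1, r.-1).
Proof.
move=> c1.
rewrite -[X in X * _]c1 -sum_inter; last by apply: ltnW.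
under eq_bigr => e2 _ do rewrite setIC.
apply: sum_sub_le; first exact: uniq_avail.
by move=> S; rewrite mem_avail !inE => /andP[-> _].
Qed.

Definition G1set (e1 : {set T}) : {set {set T}} :=
  [set S : {set T} | [&& #|S| == r, S != e1 & S :&: e1 != set0]].

Lemma G1_le (e1 : {set T}) : #|G1set e1| <= size (avail r [:: e1]).
Proof.
apply: card_le_size => S; rewrite inE mem_avail => /and3P[-> h1 h2].
by rewrite /= !inE h1 h2.
Qed.

Lemma q_ge1 : (1 <= INR n / INR (n - 3 * r))%R.
Proof.
have hd : (0 < INR (n - 3 * r))%R by apply: lt_0_INR; apply/ltP; lia.
apply: Rle_div_r' => //; rewrite Rmult_1_l; apply: INR_leq; lia.
Qed.

Lemma C1_le_Cs (E : R) : ((INR n / INR (n - 3 * r)) ^ r <= E)%R ->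
  (INR 'C(n.-1, r.-1) <= INR 'C(n - r, r.-1) * E)%R.
Proof.
move=> hE.
apply: Rle_trans (binratio (m := n - r) (N := n) (d := n - 3 * r) _ _ _ _ _) _; try lia.
apply: Rmult_le_compat_l; first exact: pos_INR.
apply: Rle_trans hE; apply: Rle_pow; first exact: q_ge1.
apply/leP; lia.
Qed.

Lemma Cq_le_Cp (E : R) : ((INR n / INR (n - 3 * r)) ^ r <= E)%R ->
  (INR 'C(n.-1, r.-2) <= INR 'C(n - 2 * r, r.-2) * E)%R.
Proof.
move=> hE.
apply: Rle_trans (binratio (m := n - 2 * r) (N := n) (d := n - 3 * r) _ _ _ _ _) _; try lia.
apply: Rmult_le_compat_l; first exact: pos_INR.
apply: Rle_trans hE; apply: Rle_pow; first exact: q_ge1.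
apply/leP; lia.
Qed.

Lemma C1_Cq : r.-1 * 'C(n.-1, r.-1) <= n * 'C(n.-1, r.-2).
Proof.
have := mul_bin_left n.-1 r.-2.
have -> : r.-2.+1 = r.-1 by lia.
move=> ->; apply: leq_mul => //; lia.
Qed.


Lemma reg1 (e1 : {set T}) : #|e1| = r -> r * r <= 8 * n ->
  (sumR (avail r [:: e1]) (fun e2 => / INR (size (avail r [:: e1])) * inner e1 e2)
     <= (2 / INR r + 8 * exp 48 * INR n / INR r ^ 3) * exp 48)%R.
Proof.
move=> c1 hr.
have hE := qE r2 h6 hr.
have rp : (0 < INR r)%R by apply: lt_0_INR; apply/ltP; lia.
have r2R : (2 <= INR r)%R by have := INR_leq r2; simpl INR; lra.
have np : (0 < INR n)%R by apply: lt_0_INR; apply/ltP; lia.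
have Ep : (0 < exp 48)%R by apply: exp_pos.
have r3 : (0 < INR r ^ 3)%R by apply: pow_lt.
have C10 : (0 <= INR 'C(n.-1, r.-1))%R by apply: pos_INR.
have pr : INR r.-1 = (INR r - 1)%R by rewrite -subn1 INR_sub //; lia.
have hC1q := INR_leq C1_Cq; rewrite !INR_mul pr in hC1q.
have hCq := Cq_le_Cp hE.
apply: per_e1.
- apply: Rle_div_r' => //; rewrite Rmult_0_l; nra.
- lra.
- move=> e2; rewrite mem_avail => /and3P[ce2 ne _] hk.
  set k := #|e1 :&: e2|.
  have cA : #|e1 :\: e2| = r - k by rewrite cardsD c1.
  have cB : #|e2 :\: e1| = r - k by rewrite cardsD (eqP ce2) setIC.
  have dAB : [disjoint e1 :\: e2 & e2 :\: e1].
    rewrite -setI_eq0; apply/eqP/setP => x; rewrite !inE.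
    by case: (x \in e1); case: (x \in e2); rewrite ?andbF.
  have hG := @inj2 n r (e1 :\: e2) (e2 :\: e1) r2 dAB.
  rewrite cA cB in hG.
  have hG' : (r - k) * (r - k) * 'C(n - (r - k) - (r - k), r.-2) <= #|Gset e1 e2| := hG.
  have hG4 : r * r * 'C(n - 2 * r, r.-2) <= 4 * #|Gset e1 e2|.
    apply: leq_trans (_ : 4 * ((r - k) * (r - k) * 'C(n - (r - k) - (r - k), r.-2)) <= _);
      last by rewrite leq_mul2l hG' orbT.
    rewrite !mulnA; apply: leq_mul; first nia.
    by apply: leq_bin2l; lia.
  have Cp0 : 0 < 'C(n - 2 * r, r.-2) by rewrite bin_gt0; lia.
  have Gp : 0 < #|Gset e1 e2|.
    have : 0 < r * r * 'C(n - 2 * r, r.-2) by rewrite !muln_gt0 Cp0 andbT; lia.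
    lia.
  apply: Rle_trans (inner_bound c1 (eqP ce2) Gp) _.
  have GpR : (0 < INR #|Gset e1 e2|)%R by apply: lt_0_INR; apply/ltP.
  have hG4R := INR_leq hG4; rewrite !INR_mul in hG4R; simpl (INR 4) in hG4R.
  rewrite /Rdiv Rmult_assoc; apply: Rmult_le_compat_l; first exact: pos_INR.
  rewrite -/(Rdiv _ _); apply: Rdiv_le_l' => //.
  have -> : (8 * exp 48 * INR n / INR r ^ 3 * INR #|Gset e1 e2| =
             (8 * exp 48 * INR n * INR #|Gset e1 e2|) / INR r ^ 3)%R by field; lra.
  apply: Rle_div_r' => //.
  set C1 := INR 'C(n.-1, r.-1) in C10 hC1q *.
  set Cq := INR 'C(n.-1, r.-2) in hC1q hCq.
  set Cp := INR 'C(n - 2 * r, r.-2) in hCq hG4R.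
  set G := INR #|Gset e1 e2| in GpR hG4R *.
  have Cp00 : (0 <= Cp)%R by apply: pos_INR.
  have ha : (0 <= (INR r - 2) * C1)%R by apply: Rmult_le_pos; lra.
  have hb : (INR n * Cq <= INR n * (Cp * exp 48))%R by apply: Rmult_le_compat_l; lra.
  have h1 : (INR r * C1 <= 2 * INR n * exp 48 * Cp)%R by nra.
  have -> : (C1 * INR r ^ 3 = (INR r * INR r) * (INR r * C1))%R by simpl; ring.
  apply: Rle_trans (_ : (INR r * INR r) * (2 * INR n * exp 48 * Cp) <= _)%R.
    by apply: Rmult_le_compat_l => //; nra.
  have -> : (INR r * INR r * (2 * INR n * exp 48 * Cp) = (2 * INR n * exp 48) * (INR r * INR r * Cp))%R by ring.
  apply: Rle_trans (_ : (2 * INR n * exp 48) * (4 * G) <= _)%R.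
    by apply: Rmult_le_compat_l => //; nra.
  right; ring.
- have hs := INR_leq (sum_k_le c1); rewrite INR_mul in hs.
  apply: Rle_trans hs _.
  have h1 := @inj1 n r e1 r2; rewrite c1 in h1.
  have h1' : r * 'C(n - r, r.-1) <= #|G1set e1| := h1.
  have h2 := INR_leq (leq_trans h1' (G1_le e1)); rewrite INR_mul in h2.
  have h3 := C1_le_Cs hE.
  have Cs0 : (0 <= INR 'C(n - r, r.-1))%R by apply: pos_INR.
  nra.
Qed.


Lemma card3 (U : finType) (A B C : {set U}) : #|A :|: B :|: C| <= #|A| + #|B| + #|C|.
Proof.
apply: leq_trans (leq_card_setU _ _).1 _; rewrite leq_add2r.
exact: (leq_card_setU _ _).1.
Qed.

Lemma card_rsS : #|rsS| = 'C(n, r).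
Proof. by rewrite card_draws card_ord. Qed.

Lemma reg2 (e1 : {set T}) : #|e1| = r -> 8 * n < r * r ->
  (sumR (avail r [:: e1]) (fun e2 => / INR (size (avail r [:: e1])) * inner e1 e2)
     <= (2 / INR r + 2 * INR r / INR n) * (2 * INR r * INR r / INR n))%R.
Proof.
move=> c1 hr.
have rp : (0 < INR r)%R by apply: lt_0_INR; apply/ltP; lia.
have np : (0 < INR n)%R by apply: lt_0_INR; apply/ltP; lia.
have hC1 := f_equal INR C1E; rewrite !INR_mul in hC1.
have C0 : 0 < 'C(n, r) by rewrite bin_gt0; lia.
have C0R : (0 < INR 'C(n, r))%R by apply: lt_0_INR; apply/ltP.
have C10 : (0 <= INR 'C(n.-1, r.-1))%R by apply: pos_INR.
apply: per_e1.
- apply: Rle_div_r' => //; rewrite Rmult_0_l; lra.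
- apply: Rle_div_r' => //; rewrite Rmult_0_l; nra.
- move=> e2; rewrite mem_avail => /and3P[ce2 ne _] hk.
  set k := #|e1 :&: e2|.
  set A := e1 :\: e2; set B := e2 :\: e1.
  have cA : #|A| = r - k by rewrite cardsD c1.
  have cB : #|B| = r - k by rewrite cardsD (eqP ce2) setIC.
  have sub : rsS \subset [set S : {set T} | (#|S| == r) && (S :&: A == set0)] :|:
       [set S : {set T} | (#|S| == r) && (S :&: B == set0)] :|: Gset e1 e2.
    apply/subsetP => S; rewrite !inE => cS; rewrite cS /=.
    by case: (S :&: A == set0); case: (S :&: B == set0).
  have hU := leq_trans (subset_leq_card sub) (card3 _ _ _).
  rewrite card_rsS !card_avoid cA cB in hU.
  have hs := @avoid_small n r (r - k).
  have hs' : (INR 'C(n - (r - k), r) <= INR 'C(n, r) / 5)%R by apply: hs; nia.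
  have hU' : 'C(n, r) <= 'C(n - (r - k), r) + 'C(n - (r - k), r) + #|Gset e1 e2| := hU.
  have hUR := INR_leq hU'; rewrite !INR_add in hUR.
  have Gp : 0 < #|Gset e1 e2|.
    case: (posnP #|Gset e1 e2|) => // h0; rewrite h0 in hUR; simpl (INR 0) in hUR.
    exfalso; lra.
  apply: Rle_trans (inner_bound c1 (eqP ce2) Gp) _.
  have GpR : (0 < INR #|Gset e1 e2|)%R by apply: lt_0_INR; apply/ltP.
  rewrite /Rdiv Rmult_assoc; apply: Rmult_le_compat_l; first exact: pos_INR.
  rewrite -/(Rdiv _ _); apply: Rdiv_le_l' => //.
  have -> : (2 * INR r / INR n * INR #|Gset e1 e2| =
             (2 * INR r * INR #|Gset e1 e2|) / INR n)%R by field; lra.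
  apply: Rle_div_r' => //.
  rewrite Rmult_comm hC1.
  have hCG : (INR 'C(n, r) <= 2 * INR #|Gset e1 e2|)%R by lra.
  have -> : (2 * INR r * INR #|Gset e1 e2| = INR r * (2 * INR #|Gset e1 e2|))%R by ring.
  apply: Rmult_le_compat_l; lra.
- have hs := INR_leq (sum_k_le c1); rewrite INR_mul in hs.
  apply: Rle_trans hs _.
  have sub : rsS \subset [set S : {set T} | (#|S| == r) && (S :&: e1 == set0)] :|:
       G1set e1 :|: [set e1].
    apply/subsetP => S; rewrite !inE => cS; rewrite cS /=.
    by case: (S :&: e1 == set0); case: (S == e1).
  have hU := leq_trans (subset_leq_card sub) (card3 _ _ _).
  rewrite card_rsS card_avoid cards1 c1 in hU.
  have hU2 : 'C(n, r) <= 'C(n - r, r) + size (avail r [:: e1]) + 1.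
    apply: leq_trans hU _; rewrite leq_add2r leq_add2l; exact: G1_le.
  have hs1 : (INR 'C(n - r, r) <= INR 'C(n, r) / 5)%R by apply: avoid_small; nia.
  have h1 : 1 <= 'C(n - r, r) by rewrite bin_gt0; lia.
  have h1R := INR_leq h1; simpl (INR 1) in h1R.
  have hUR := INR_leq hU2; rewrite !INR_add in hUR; simpl (INR 1) in hUR.
  set s1 := INR (size (avail r [:: e1])) in hUR *.
  have hh : (INR r * INR 'C(n.-1, r.-1) * INR n <= 2 * INR r * INR r * s1)%R.
    have -> : (INR r * INR 'C(n.-1, r.-1) * INR n = INR r * (INR n * INR 'C(n.-1, r.-1)))%R by ring.
    rewrite hC1.
    have hCs : (INR 'C(n, r) <= 2 * s1)%R by lra.
    have -> : (2 * INR r * INR r * s1 = INR r * (INR r * (2 * s1)))%R by ring.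
    apply: Rmult_le_compat_l; first lra.
    apply: Rmult_le_compat_l; lra.
  have hh' := Rle_div_r' np hh.
  apply: Rle_trans hh' _; right; field; lra.
Qed.


Definition Bnd : R :=
  ((2 / INR r + 8 * exp 48 * INR n / INR r ^ 3) * exp 48 +
   (2 / INR r + 2 * INR r / INR n) * (2 * INR r * INR r / INR n))%R.

Lemma probB3_le : (probB3 n r <= Bnd)%R.
Proof.
have rp : (0 < INR r)%R by apply: lt_0_INR; apply/ltP; lia.
have np : (0 < INR n)%R by apply: lt_0_INR; apply/ltP; lia.
have Ep : (0 < exp 48)%R by apply: exp_pos.
have r3 : (0 < INR r ^ 3)%R by apply: pow_lt.
have t1 : (0 <= (2 / INR r + 8 * exp 48 * INR n / INR r ^ 3) * exp 48)%R.
  apply: Rmult_le_pos; last lra.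
  have : (0 <= 2 / INR r)%R by apply: Rle_div_r' => //; lra.
  have : (0 <= 8 * exp 48 * INR n / INR r ^ 3)%R by apply: Rle_div_r' => //; nra.
  lra.
have t2 : (0 <= (2 / INR r + 2 * INR r / INR n) * (2 * INR r * INR r / INR n))%R.
  apply: Rmult_le_pos.
    have : (0 <= 2 / INR r)%R by apply: Rle_div_r' => //; lra.
    have : (0 <= 2 * INR r / INR n)%R by apply: Rle_div_r' => //; nra.
    lra.
  by apply: Rle_div_r' => //; nra.
have sz : size (rsets n r) = 'C(n, r) by apply: size_rsets.
have C0 : 0 < 'C(n, r) by rewrite bin_gt0; lia.
have C0R : (0 < INR (size (rsets n r)))%R by rewrite sz; apply: lt_0_INR; apply/ltP.
rewrite /probB3.
apply: Rle_trans (_ : sumR (rsets n r) (fun _ => / INR (size (rsets n r)) * Bnd) <= _)%R.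
  apply: sumR_le => e1; rewrite mem_rsets => /eqP c1.
  apply: Rmult_le_compat_l; first by apply: Rlt_le; apply: Rinv_0_lt_compat.
  rewrite /Bnd; case: (leqP (r * r) (8 * n)) => hr.
    by apply: Rle_trans (reg1 c1 hr) _; lra.
  by apply: Rle_trans (reg2 c1 hr) _; lra.
rewrite sumR_const; right; field; lra.
Qed.

End Main.


Lemma Rinv_INR_ge0 (m : nat) : (0 <= / INR m)%R.
Proof.
case: m => [|m]; first by rewrite Rinv_0; lra.
by apply: Rlt_le; apply: Rinv_0_lt_compat; apply: lt_0_INR; lia.
Qed.

Lemma probB3_ge0 n r : (0 <= probB3 n r)%R.
Proof.
apply: sumR_ge0 => e1 _; apply: Rmult_le_pos; first exact: Rinv_INR_ge0.
apply: sumR_ge0 => e2 _; apply: Rmult_le_pos; first exact: Rinv_INR_ge0.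
apply: sumR_ge0 => e3 _; apply: Rmult_le_pos; first exact: Rinv_INR_ge0.
by case: (_ != _); lra.
Qed.

Lemma cube_facts (n : nat) : (1 <= INR n)%R ->
  let x := Rpower (INR n) (1 / 3) in
  [/\ (0 < x)%R, (1 <= x)%R, INR n = (x ^ 3)%R & Rpower (INR n) (2 / 3) = (x ^ 2)%R].
Proof.
move=> hn x.
have np : (0 < INR n)%R by lra.
have xp : (0 < x)%R by rewrite /x /Rpower; apply: exp_pos.
have e3 : INR n = (x ^ 3)%R.
  rewrite /x -Rpower_pow // Rpower_mult.
  have -> : (1 / 3 * INR 3 = 1)%R by simpl; field.
  by rewrite Rpower_1.
have e2 : Rpower (INR n) (2 / 3) = (x ^ 2)%R.
  rewrite /x -Rpower_pow // Rpower_mult.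
  by have -> : (1 / 3 * INR 2 = 2 / 3)%R by simpl; field.
split => //.
case: (Rle_or_lt 1 x) => // hx.
have : (x ^ 3 < 1)%R.
  have h1 : (x * x < 1)%R by nra.
  simpl; nra.
lra.
Qed.

Lemma bnd_small (n r : nat) (x rho sig : R) :
  (0 < x)%R -> (1 <= x)%R -> INR n = (x ^ 3)%R -> INR r = (rho * x)%R ->
  INR r = (sig * x ^ 2)%R -> (1 <= rho)%R -> (0 <= sig <= 1)%R ->
  (Bnd n r <= (2 * exp 48 + 8 * exp 48 * exp 48) / rho + 8 * sig)%R.
Proof.
move=> xp x1 en er1 er2 rho1 sig01.
have rp : (0 < INR r)%R by rewrite er1; nra.
have np : (0 < INR n)%R by rewrite en; apply: pow_lt.
have Ep : (0 < exp 48)%R by apply: exp_pos.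
have -> : Bnd n r = (2 * exp 48 * (1 / INR r) + 8 * exp 48 * exp 48 * (INR n / INR r ^ 3)
    + 4 * (INR r / INR n) + 4 * (INR r ^ 3 / (INR n ^ 2)))%R.
  rewrite /Bnd; field; lra.
have ha : (1 / INR r <= 1 / rho)%R.
  apply: Rmult_le_compat_l; first lra.
  apply: Rinv_le_contravar; first lra.
  rewrite er1; nra.
have hb : (INR n / INR r ^ 3 <= 1 / rho)%R.
  have -> : (INR n / INR r ^ 3 = 1 / (rho ^ 3))%R.
    rewrite en er1; field; lra.
  apply: Rmult_le_compat_l; first lra.
  apply: Rinv_le_contravar; first lra.
  have : (1 <= rho * rho)%R by nra.
  simpl; nra.
have hc : (INR r / INR n <= sig)%R.
  have -> : (INR r / INR n = sig / x)%R by rewrite er2 en; field; lra.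
  apply: Rdiv_le_l' => //; nra.
have hd : (INR r ^ 3 / INR n ^ 2 <= sig)%R.
  have -> : (INR r ^ 3 / INR n ^ 2 = sig ^ 3)%R.
    rewrite er2 en; field; lra.
  have : (sig * sig <= 1)%R by nra.
  simpl; nra.
have -> : ((2 * exp 48 + 8 * exp 48 * exp 48) / rho =
   2 * exp 48 * (1 / rho) + 8 * exp 48 * exp 48 * (1 / rho))%R by field; lra.
have E2 : (0 < 8 * exp 48 * exp 48)%R by nra.
nra.
Qed.

Theorem lemma7 (r : nat -> nat) :
  (forall M : R, exists N : nat, forall n : nat, (N <= n)%coq_nat ->
      (M < INR (r n) / Rpower (INR n) (1 / 3))%R) ->
  Un_cv (fun n => (INR (r n) / Rpower (INR n) (2 / 3))%R) 0%R ->
  Un_cv (fun n => probB3 n (r n)) 0%R.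
Proof.
move=> H1 H2 eps epsp.
have Ep : (0 < exp 48)%R by apply: exp_pos.
set c := (2 * exp 48 + 8 * exp 48 * exp 48)%R.
have cp : (0 < c)%R by rewrite /c; nra.
have [N1 hN1] := H1 (2 + 2 * c / eps)%R.
have delp : (0 < Rmin (1 / 6) (eps / 32))%R by apply: Rmin_pos; lra.
have [N2 hN2] := H2 _ delp.
exists (maxn (maxn N1 N2) 1) => n hn.
have hn' : maxn (maxn N1 N2) 1 <= n by apply/leP.
have hnN1 : (N1 <= n)%coq_nat by apply/leP; lia.
have hnN2 : (n >= N2)%coq_nat by apply/leP; lia.
have h1n : 1 <= n by lia.
have hn1 : (1 <= INR n)%R by have := INR_leq h1n; simpl (INR 1).
have [xp x1 en e2] := cube_facts hn1.
set x := Rpower (INR n) (1 / 3) in xp x1 en e2 hN1.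
have hrho := hN1 n hnN1.
have hsig := hN2 n hnN2.
rewrite /R_dist Rminus_0_r e2 in hsig.
set rho := (INR (r n) / x)%R in hrho.
set sig := (INR (r n) / x ^ 2)%R in hsig.
have x2 : (0 < x ^ 2)%R by apply: pow_lt.
have sig0 : (0 <= sig)%R by apply: Rle_div_r' => //; rewrite Rmult_0_l; apply: pos_INR.
rewrite Rabs_right in hsig; last lra.
have hs1 : (sig < 1 / 6)%R by apply: Rlt_le_trans hsig (Rmin_l _ _).
have hs2 : (sig < eps / 32)%R by apply: Rlt_le_trans hsig (Rmin_r _ _).
have er1 : INR (r n) = (rho * x)%R by rewrite /rho; field; lra.
have er2 : INR (r n) = (sig * x ^ 2)%R by rewrite /sig; field; lra.
have h2c : (0 <= 2 * c / eps)%R by apply: Rle_div_r' => //; nra.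
have rho1 : (1 <= rho)%R by lra.
have hr2 : 1 < r n.
  have : (2 <= INR (r n))%R by rewrite er1; nra.
  have -> : (2 = INR 2)%R by [].
  move/INR_le/leP; lia.
have hr6 : 6 * r n <= n.
  have : (INR (6 * r n) <= INR n)%R.
    rewrite INR_mul en er2; simpl INR.
    have : (sig * x ^ 2 <= sig * x ^ 3)%R.
      apply: Rmult_le_compat_l => //; simpl; nra.
    nra.
  by move/INR_le/leP.
have pb := probB3_le hr2 hr6.
have sig1 : (sig <= 1)%R by lra.
have bs := bnd_small xp x1 en er1 er2 rho1 (conj sig0 sig1).
have p0 := probB3_ge0 n (r n).
rewrite /R_dist Rminus_0_r Rabs_right; last lra.
have hcr : (c / rho < eps / 2)%R.
  have : (2 * c < rho * eps)%R.
    have : (2 * c / eps * eps = 2 * c)%R by field; lra.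
    nra.
  move=> h; apply: (Rmult_lt_reg_r rho); first lra.
  have -> : (c / rho * rho = c)%R by field; lra.
  lra.
rewrite -/c in bs.
lra.
Qed.
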